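(* Let $a=p/q\geq1$ be rational with $p,q$ coprime, and let $(d,e;m)\in\mathcal{E}$. Define the error vector $\varepsilon$ by $m=\frac{d+e}{\sqrt{2a}}\,w(a)+\varepsilon$ (vectors padded with zeros to a common length). Then: (i) $\mu(d,e;m)(a)\leq\frac{\sqrt{2de+1}\sqrt a}{d+e}$. In particular $\mu(d,d;m)(a)\leq\sqrt{1+\frac{1}{2d^2}}\sqrt{\frac a2}$, and if $e=d-1$ then $\mu(d,e;m)(a)\leq\sqrt{1+\frac{1}{(2d-1)^2}}\sqrt{\frac a2}$. (ii) $\mu(d,e;m)(a)>\sqrt{a/2}$ if and only if $\langle\varepsilon,w(a)\rangle>0$. (iii) If $e=d$ and $\mu(d,e;m)(a)>\sqrt{a/2}$, then $\langle\varepsilon,\varepsilon\rangle<1$; if $e=d-1$ and $\mu(d,e;m)(a)>\sqrt{a/2}$, then $\langle\varepsilon,\varepsilon\rangle<\frac12$. (iv) The sum of all entries of $\varepsilon$ satisfies $-\sum_i\varepsilon_i=\frac{d+e}{\sqrt{2a}}\left(y(a)-\frac1q\right)+1$, where $y(a):=a+1-2\sqrt{2a}$.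
   Context: Weight expansion: for rational $a=p/q\geq1$ in lowest terms with continued fraction $[l_0;l_1,\dots,l_N]$ ($l_N\geq2$ if $N\geq1$), $w(a)=(1^{\times l_0},x_1^{\times l_1},\dots,x_N^{\times l_N})$ with $x_0=1$, $x_1=a-l_0$, $x_i=x_{i-2}-l_{i-1}x_{i-1}$; $x^{\times l}$ is $x$ repeated $l$ times. The set $\mathcal{E}$: a Cremona transform of an integer tuple $(\delta;n_1,\dots,n_k)$ with $n_1\geq\dots\geq n_k$ is $(2\delta-n_1-n_2-n_3;\delta-n_2-n_3,\delta-n_1-n_3,\delta-n_1-n_2,n_4,\dots,n_k)$; a Cremona move is a Cremona transform followed by a permutation of the entries after the semicolon. $\mathcal{E}$ consists of $(0,0;-1)$ together with all integer tuples $(d,e;m_1,\dots,m_M)$ with $d,e\geq0$, $m_1\geq\dots\geq m_M\geq0$, satisfying $\sum m_i=2(d+e)-1$, $\sum m_i^2=2de+1$, and such that $(d+e-m_1;d-m_1,e-m_1,m_2,\dots,m_M)$ reduces to $(0;-1,0,\dots,0)$ by repeated Cremona moves. $\mu(d,e;m)(a):=\langle m,w(a)\rangle/(d+e)$, with $\langle\cdot,\cdot\rangle$ the Euclidean scalar product after padding with zeros. *)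

(* Defs.v *)
From Stdlib Require Import Reals Lra Lia ZArith Arith List Permutation Sorted Relations.
Import ListNotations.
Open Scope R_scope.

Fixpoint cf_val (ls : list nat) : R :=
  match ls with
  | [] => 0
  | [l] => INR l
  | l :: rest => INR l + / cf_val rest
  end.

Definition is_cf (ls : list nat) (a : R) : Prop :=
  ls <> [] /\
  Forall (fun l => (1 <= l)%nat) (tl ls) /\
  ((2 <= length ls)%nat -> (2 <= last ls 0)%nat) /\
  cf_val ls = a.

(* wtail x_{i-1} x_i [l_i; ...; l_N] = (x_i^{x l_i}, x_{i+1}^{x l_{i+1}}, ...),
   with x_{i+1} = x_{i-1} - l_i x_i *)
Fixpoint wtail (xprev xcur : R) (ls : list nat) : list R :=
  match ls with
  | [] => []
  | l :: rest => repeat xcur l ++ wtail xcur (xprev - INR l * xcur) rest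
  end.

(* w(a) = (1^{x l0}, x_1^{x l1}, ..., x_N^{x lN}), x_0 = 1, x_1 = a - l0 *)
Definition weight_exp (ls : list nat) (a : R) : list R :=
  match ls with
  | [] => []
  | l0 :: rest => repeat 1 l0 ++ wtail 1 (a - INR l0) rest
  end.

Definition dotR (u v : list R) : R :=
  fold_right Rplus 0
    (map (fun i => nth i u 0 * nth i v 0) (seq 0 (Nat.max (length u) (length v)))).

Definition subR (u v : list R) : list R :=
  map (fun i => nth i u 0 - nth i v 0) (seq 0 (Nat.max (length u) (length v))).

Definition sumR (u : list R) : R := fold_right Rplus 0 u.

Definition zlistR (m : list Z) : list R := map IZR m.

Definition ctuple := (Z * list Z)%type.

Inductive cstep : ctuple -> ctuple -> Prop :=
  | cs_perm delta n n' : Permutation n n' -> cstep (delta, n) (delta, n')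
  | cs_pad delta n : cstep (delta, n) (delta, n ++ [0%Z])
  | cs_cremona delta n1 n2 n3 rest :
      Sorted Z.ge (n1 :: n2 :: n3 :: rest) ->
      cstep (delta, n1 :: n2 :: n3 :: rest)
            ((2 * delta - n1 - n2 - n3)%Z,
             (delta - n2 - n3)%Z :: (delta - n1 - n3)%Z :: (delta - n1 - n2)%Z :: rest).

Definition creduces (t : ctuple) : Prop :=
  exists k : nat, clos_refl_trans ctuple cstep t (0%Z, (-1)%Z :: repeat 0%Z k).

Definition sumZ (m : list Z) : Z := fold_right Z.add 0%Z m.
Definition sumsqZ (m : list Z) : Z := fold_right (fun x s => x * x + s)%Z 0%Z m.

Definition in_E (d e : Z) (m : list Z) : Prop :=
  (d = 0%Z /\ e = 0%Z /\ m = [(-1)%Z]) \/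
  ((0 <= d)%Z /\ (0 <= e)%Z /\ Sorted Z.ge m /\ Forall (fun x => (0 <= x)%Z) m /\
   sumZ m = (2 * (d + e) - 1)%Z /\ sumsqZ m = (2 * d * e + 1)%Z /\
   creduces ((d + e - hd 0 m)%Z, (d - hd 0 m)%Z :: (e - hd 0 m)%Z :: tl m)).

(* mu(d,e;m)(a) = <m, w(a)> / (d+e), w(a) computed from the continued fraction ls of a *)
Definition mu (d e : Z) (m : list Z) (ls : list nat) (a : R) : R :=
  dotR (zlistR m) (weight_exp ls a) / IZR (d + e).

Definition err_vec (d e : Z) (m : list Z) (ls : list nat) (a : R) : list R :=
  subR (zlistR m) (map (fun x => IZR (d + e) / sqrt (2 * a) * x) (weight_exp ls a)).

(* Main.v *)
Require Import Defs.
From Stdlib Require Import Reals ZArith Arith List Lra Lia.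
Import ListNotations.
Open Scope R_scope.


Definition sqsum (u : list R) : R := sumR (map (fun x => x * x) u).

Lemma sumR_app u v : sumR (u ++ v) = sumR u + sumR v.
Proof. unfold sumR; rewrite fold_right_app. induction u; simpl; [lra|]. unfold sumR in IHu. rewrite IHu; lra. Qed.

Lemma sumR_repeat x l : sumR (repeat x l) = INR l * x.
Proof. induction l; simpl repeat; unfold sumR in *; simpl fold_right.
 - simpl; lra.
 - rewrite IHl, S_INR; lra. Qed.

Lemma sqsum_app u v : sqsum (u ++ v) = sqsum u + sqsum v.
Proof. unfold sqsum; rewrite map_app; apply sumR_app. Qed.

Lemma sqsum_repeat x l : sqsum (repeat x l) = INR l * (x * x).
Proof. unfold sqsum; rewrite map_repeat; apply sumR_repeat. Qed.

Lemma cf_val_ge1 ls : ls <> [] -> Forall (fun l => (1 <= l)%nat) ls -> 1 <= cf_val ls.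
Proof.
  induction ls as [|l rest IH]; intros Hne HF; [congruence|].
  inversion HF; subst. apply le_INR in H1. simpl INR in H1.
  destruct rest as [|l' rest'].
  - simpl; lra.
  - change (cf_val (l :: l' :: rest')) with (INR l + / cf_val (l' :: rest')).
    assert (1 <= cf_val (l' :: rest')) by (apply IH; [congruence|assumption]).
    assert (0 < / cf_val (l' :: rest')) by (apply Rinv_0_lt_compat; lra). lra.
Qed.

Lemma wtail_sums ls : forall (r s : nat) (Q : R), 0 < Q -> ls <> [] ->
  Forall (fun l => (1 <= l)%nat) (tl ls) -> (0 < s)%nat ->
  cf_val ls = INR r / INR s ->
  sumR (wtail (INR r / Q) (INR s / Q) ls) = (INR r + INR s - INR (Nat.gcd r s)) / Q /\
  sqsum (wtail (INR r / Q) (INR s / Q) ls) = INR r * INR s / (Q * Q).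
Proof.
  induction ls as [|l rest IH]; intros r s Q HQ Hne HF Hs Hcf; [congruence|].
  assert (HsR : 0 < INR s) by (apply lt_0_INR; lia).
  destruct rest as [|l' rest'].
  - simpl in Hcf.
    assert (Hr : r = (l * s)%nat).
    { apply INR_eq. rewrite mult_INR, Hcf. field. lra. }
    simpl wtail. rewrite app_nil_r, sumR_repeat, sqsum_repeat.
    rewrite Hr, Nat.gcd_comm, Nat.mul_comm, Nat.gcd_mul_diag_l, mult_INR.
    split; field; lra.
  - change (cf_val (l :: l' :: rest')) with (INR l + / cf_val (l' :: rest')) in Hcf.
    simpl tl in HF.
    assert (Hv : 1 <= cf_val (l' :: rest')) by (apply cf_val_ge1; [congruence|assumption]).
    set (v := cf_val (l' :: rest')) in *.
    assert (HrR : INR r = INR l * INR s + INR s / v).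
    { replace (INR r) with (INR r / INR s * INR s) by (field; lra). rewrite <- Hcf. field. lra. }
    assert (Hpos : 0 < INR s / v) by (apply Rdiv_lt_0_compat; lra).
    assert (Hlt : (l * s < r)%nat).
    { apply INR_lt. rewrite mult_INR. lra. }
    set (r' := (r - l * s)%nat).
    assert (Hr'R : INR r' = INR s / v).
    { unfold r'. rewrite minus_INR by lia. rewrite mult_INR. lra. }
    assert (Hr'pos : (0 < r')%nat) by (unfold r'; lia).
    assert (Hr'R0 : 0 < INR r') by (apply lt_0_INR; lia).
    destruct (IH s r' Q HQ ltac:(congruence) ltac:(inversion HF; simpl; apply Forall_inv_tail with l'; assumption) Hr'pos)
      as [IH1 IH2].
    { change (v = INR s / INR r'). rewrite Hr'R. field. split; lra. }
    change (wtail (INR r / Q) (INR s / Q) (l :: l' :: rest')) with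
      (repeat (INR s / Q) l ++ wtail (INR s / Q) (INR r / Q - INR l * (INR s / Q)) (l' :: rest')).
    replace (INR r / Q - INR l * (INR s / Q)) with (INR r' / Q)
      by (rewrite Hr'R, HrR; field; split; lra).
    rewrite sumR_app, sqsum_app, sumR_repeat, sqsum_repeat, IH1, IH2.
    assert (Hg : Nat.gcd r s = Nat.gcd s r').
    { rewrite Nat.gcd_comm. replace r with (r' + l * s)%nat by (unfold r'; lia).
      apply Nat.gcd_add_mult_diag_r. }
    rewrite Hg.
    assert (HrR' : INR r = INR r' + INR l * INR s) by lra.
    rewrite HrR'. split; field; lra.
Qed.

Definition Sk (k n : nat) (f : nat -> R) : R := fold_right Rplus 0 (map f (seq k n)).

Lemma Sk_plus k n f g : Sk k n (fun i => f i + g i) = Sk k n f + Sk k n g.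
Proof. revert k; induction n; intro k; unfold Sk in *; simpl; [lra|]. rewrite IHn; lra. Qed.

Lemma Sk_scal k n c f : Sk k n (fun i => c * f i) = c * Sk k n f.
Proof. revert k; induction n; intro k; unfold Sk in *; simpl; [lra|]. rewrite IHn; lra. Qed.

Lemma Sk_ext k n f g : (forall i, (k <= i < k + n)%nat -> f i = g i) -> Sk k n f = Sk k n g.
Proof. revert k; induction n; intros k H; unfold Sk in *; simpl; [lra|].
  rewrite (H k) by lia. rewrite (IHn (S k)) by (intros; apply H; lia). reflexivity. Qed.

Lemma Sk_le k n f g : (forall i, f i <= g i) -> Sk k n f <= Sk k n g.
Proof. revert k; induction n; intros k; unfold Sk in *; simpl; intros; [lra|].
  specialize (IHn (S k) H). specialize (H k). lra. Qed.

Lemma Sk_zero k n f : (forall i, (k <= i)%nat -> f i = 0) -> Sk k n f = 0.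
Proof. revert k; induction n; intros k H; unfold Sk in *; simpl; [lra|].
  rewrite H by lia. rewrite IHn by (intros; apply H; lia). lra. Qed.

Lemma Sk_extend n n' f : (n <= n')%nat -> (forall i, (n <= i)%nat -> f i = 0) ->
  Sk 0 n' f = Sk 0 n f.
Proof. intros Hle H. unfold Sk. replace n' with (n + (n' - n))%nat by lia.
  rewrite seq_app, map_app, fold_right_app.
  fold (Sk (0 + n) (n' - n) f). rewrite Sk_zero by (intros; apply H; lia). reflexivity.
Qed.

Lemma Sk_shift k n f : Sk (S k) n f = Sk k n (fun i => f (S i)).
Proof. unfold Sk. rewrite <- seq_shift, map_map. reflexivity. Qed.

Lemma sumR_Sk u : sumR u = Sk 0 (length u) (fun i => nth i u 0).
Proof. induction u; [reflexivity|]. simpl length. unfold Sk in *; simpl.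
  rewrite <- seq_shift, map_map. simpl. rewrite <- IHu. reflexivity. Qed.

Lemma sumR_Sk_N u N : (length u <= N)%nat -> sumR u = Sk 0 N (fun i => nth i u 0).
Proof. intro H. rewrite sumR_Sk. symmetry; apply Sk_extend; auto.
  intros; apply nth_overflow; lia. Qed.

Lemma dot_Sk u v N : (length u <= N)%nat -> (length v <= N)%nat ->
  dotR u v = Sk 0 N (fun i => nth i u 0 * nth i v 0).
Proof. intros Hu Hv. unfold dotR. fold (Sk 0 (Nat.max (length u) (length v)) (fun i => nth i u 0 * nth i v 0)).
  symmetry; apply Sk_extend; [lia|].
  intros. rewrite (nth_overflow u) by lia. lra. Qed.

Lemma nth_subR u v i : nth i (subR u v) 0 = nth i u 0 - nth i v 0.
Proof. unfold subR. destruct (Nat.lt_ge_cases i (Nat.max (length u) (length v))).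
  - set (f := fun j => nth j u 0 - nth j v 0).
    rewrite nth_indep with (d' := f 0%nat)
      by (rewrite length_map, length_seq; lia).
    rewrite map_nth, seq_nth by lia. reflexivity.
  - rewrite !nth_overflow; try lia. lra. rewrite length_map, length_seq; lia.
Qed.

Lemma length_subR u v : length (subR u v) = Nat.max (length u) (length v).
Proof. unfold subR. rewrite length_map, length_seq. reflexivity. Qed.

Lemma nth_scal c w i : nth i (map (fun x => c * x) w) 0 = c * nth i w 0.
Proof. revert i; induction w; intro i; destruct i; simpl; try lra; auto. Qed.

Lemma sqsum_Sk u : sumR (map (fun x => x * x) u) = Sk 0 (length u) (fun i => nth i u 0 * nth i u 0).
Proof. rewrite sumR_Sk, length_map. apply Sk_ext. intros.
  clear; revert i; induction u; intro i; destruct i; simpl; try lra; auto. Qed.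

Lemma sumZ_R m : IZR (sumZ m) = sumR (zlistR m).
Proof. induction m; [reflexivity|]. simpl. rewrite plus_IZR, IHm. reflexivity. Qed.

Lemma sumsqZ_R m : IZR (sumsqZ m) = sumR (map (fun x => x * x) (zlistR m)).
Proof. induction m; [reflexivity|]. simpl. rewrite plus_IZR, mult_IZR, IHm. reflexivity. Qed.

Lemma nth_zlist m i : nth i (zlistR m) 0 = IZR (nth i m 0%Z).
Proof. unfold zlistR. change 0 with (IZR 0). apply map_nth. Qed.

Lemma amgm_pt t x y : 0 < t -> x * y <= t / 2 * (x * x) + / (2 * t) * (y * y).
Proof. intro Ht.
  replace (t / 2 * (x * x) + / (2 * t) * (y * y)) with (x * y + (t * x - y) * (t * x - y) / (2 * t)) by (field; lra).
  assert (0 <= (t * x - y) * (t * x - y) / (2 * t)).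
  { unfold Rdiv; apply Rmult_le_pos; [apply Rle_0_sqr| left; apply Rinv_0_lt_compat; lra]. } lra. Qed.

Lemma sq_le X Y : 0 <= X -> Y * Y <= X * X -> Y <= X.
Proof. intros; nra. Qed.

Theorem lemma4p8 (p q : nat) (ls : list nat) (d e : Z) (m : list Z) :
  (0 < q)%nat -> (q <= p)%nat -> Nat.gcd p q = 1%nat ->
  is_cf ls (INR p / INR q) ->
  in_E d e m -> (0 < d + e)%Z ->
  let a := INR p / INR q in
  let w := weight_exp ls a in
  let eps := err_vec d e m ls a in
  let c := IZR (d + e) / sqrt (2 * a) in
  (* (i) *)
  (mu d e m ls a <= sqrt (2 * IZR d * IZR e + 1) * sqrt a / IZR (d + e) /\
   (e = d -> mu d e m ls a <= sqrt (1 + 1 / (2 * IZR d ^ 2)) * sqrt (a / 2)) /\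
   (e = (d - 1)%Z ->
      mu d e m ls a <= sqrt (1 + 1 / (2 * IZR d - 1) ^ 2) * sqrt (a / 2))) /\
  (* (ii) *)
  (mu d e m ls a > sqrt (a / 2) <-> dotR eps w > 0) /\
  (* (iii) *)
  ((e = d -> mu d e m ls a > sqrt (a / 2) -> dotR eps eps < 1) /\
   (e = (d - 1)%Z -> mu d e m ls a > sqrt (a / 2) -> dotR eps eps < 1 / 2)) /\
  (* (iv) *)
  (- sumR eps = c * ((a + 1 - 2 * sqrt (2 * a)) - 1 / INR q) + 1).
Proof.
  intros Hq Hqp Hg Hcf HE Hde a w eps c.
  destruct HE as [[-> [-> _]] | [Hd [He [_ [_ [Hsum [Hsq _]]]]]]]; [lia|].
  assert (HqR : 0 < INR q) by (apply lt_0_INR; lia).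
  assert (Hqp' : INR q <= INR p) by (apply le_INR; lia).
  assert (Ha1 : 1 <= a) by (unfold a; apply (Rmult_le_reg_r (INR q)); [lra|]; unfold Rdiv; rewrite Rmult_assoc, Rinv_l by lra; lra).
  assert (Hw : sumR w = a + 1 - 1 / INR q /\ sqsum w = a).
  { destruct Hcf as [Hne [HF [_ Hval]]]. destruct ls as [|l0 rest]; [congruence|].
    assert (Ew : w = wtail (INR p / INR q) (INR q / INR q) (l0 :: rest)).
    { unfold w, weight_exp. simpl wtail. replace (INR q / INR q) with 1 by (field; lra).
      rewrite Rmult_1_r. reflexivity. }
    destruct (wtail_sums (l0 :: rest) p q (INR q) HqR ltac:(congruence) HF Hq Hval) as [H1 H2].
    rewrite Ew, H1, H2, Hg. unfold a. simpl INR. split; field; lra. }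
  destruct Hw as [HwS HwQ].
  set (M := zlistR m).
  set (n := Nat.max (length M) (length w)).
  set (F := fun i => nth i M 0). set (G := fun i => nth i w 0).
  assert (HA : IZR (2 * d * e + 1) = Sk 0 n (fun i => F i * F i)).
  { rewrite <- Hsq, sumsqZ_R, sqsum_Sk. symmetry; apply Sk_extend; [unfold n, M; lia|].
    intros i Hi. unfold F. rewrite nth_overflow; [lra|]. exact Hi. }
  assert (HB : a = Sk 0 n (fun i => G i * G i)).
  { rewrite <- HwQ. unfold sqsum. rewrite sqsum_Sk. symmetry; apply Sk_extend; [unfold n; lia|].
    intros i Hi. unfold G. rewrite nth_overflow; [lra|]. exact Hi. }
  assert (HSF : IZR (2 * (d + e) - 1) = Sk 0 n F).
  { rewrite <- Hsum, sumZ_R. apply sumR_Sk_N. unfold n, M; lia. }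
  assert (HSG : a + 1 - 1 / INR q = Sk 0 n G).
  { rewrite <- HwS. apply sumR_Sk_N. unfold n; lia. }
  assert (HP : dotR M w = Sk 0 n (fun i => F i * G i)).
  { apply dot_Sk; unfold n; lia. }
  assert (Hleps : length eps = n).
  { unfold eps, err_vec. rewrite length_subR, length_map. reflexivity. }
  assert (Hneps : forall i, nth i eps 0 = F i + (- c) * G i).
  { intro i. unfold eps, err_vec. rewrite nth_subR, nth_scal. unfold F, G, M, c, w; cbv beta. ring. }
  assert (HEW : dotR eps w = Sk 0 n (fun i => F i * G i) - c * Sk 0 n (fun i => G i * G i)).
  { rewrite (dot_Sk eps w n) by (unfold n in *; lia).
    rewrite (Sk_ext 0 n _ (fun i => F i * G i + (- c) * (G i * G i)))
      by (intros; rewrite Hneps; fold (G i); ring).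
    rewrite Sk_plus, Sk_scal. ring. }
  assert (HEE : dotR eps eps = Sk 0 n (fun i => F i * F i) + (-2 * c) * Sk 0 n (fun i => F i * G i)
                 + (c * c) * Sk 0 n (fun i => G i * G i)).
  { rewrite (dot_Sk eps eps n) by lia.
    rewrite (Sk_ext 0 n _ (fun i => F i * F i + ((-2 * c) * (F i * G i) + (c * c) * (G i * G i))))
      by (intros; rewrite Hneps; ring).
    rewrite !Sk_plus, !Sk_scal. ring. }
  assert (HES : sumR eps = Sk 0 n F + (- c) * Sk 0 n G).
  { rewrite (sumR_Sk_N eps n) by lia.
    rewrite (Sk_ext 0 n _ (fun i => F i + (- c) * G i)) by (intros; apply Hneps).
    rewrite Sk_plus, Sk_scal. ring. }
  rewrite <- HB in HEW, HEE. rewrite <- HA in HEE. rewrite <- HSF, <- HSG in HES.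
  rewrite <- HP in HEW, HEE.
  assert (Hmu : mu d e m ls a = dotR M w / IZR (d + e)) by reflexivity.
  set (P := dotR M w) in *.
  assert (HdR : 0 <= IZR d) by (apply IZR_le; lia).
  assert (HeR : 0 <= IZR e) by (apply IZR_le; lia).
  assert (HDR : 0 < IZR (d + e)) by (apply IZR_lt; lia).
  assert (HA' : IZR (2*d*e+1) = 2*IZR d*IZR e + 1) by (rewrite plus_IZR, !mult_IZR; ring).
  assert (HSF' : IZR (2*(d+e)-1) = 2*IZR(d+e) - 1) by (rewrite minus_IZR, mult_IZR; ring).
  assert (HD: IZR(d+e) = IZR d + IZR e) by apply plus_IZR.
  rewrite HA' in HA, HEE. rewrite HSF' in HSF, HES.
  unfold c in HEW, HEE, HES.
  set (s := sqrt (2 * a)) in *.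
  set (DR := IZR (d + e)) in *.
  set (dR := IZR d) in *. set (eR := IZR e) in *.
  assert (Hs : s * s = 2 * a) by (apply sqrt_sqrt; lra).
  assert (Hs0 : 0 < s) by (apply sqrt_lt_R0; lra).
  assert (Hh : sqrt (a / 2) = s / 2).
  { replace (a / 2) with ((s / 2) * (s / 2)) by (field_simplify; lra). apply sqrt_square; lra. }
  rewrite Hh. unfold c.
  (* Cauchy-Schwarz *)
  set (A := 2 * dR * eR + 1) in *.
  assert (HA0 : 0 < A) by (unfold A; nra).
  set (sA := sqrt A). set (sB := sqrt a).
  assert (HsA : sA * sA = A) by (apply sqrt_sqrt; lra).
  assert (HsB : sB * sB = a) by (apply sqrt_sqrt; lra).
  assert (HsA0 : 0 < sA) by (apply sqrt_lt_R0; lra).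
  assert (HsB0 : 0 < sB) by (apply sqrt_lt_R0; lra).
  assert (HCS : P <= sA * sB).
  { set (t := sB / sA). assert (Ht : 0 < t) by (apply Rdiv_lt_0_compat; lra).
    assert (P <= t / 2 * A + / (2 * t) * a).
    { rewrite HA, HB, HP, <- Sk_scal, <- Sk_scal, <- Sk_plus. apply Sk_le. intro i. apply amgm_pt; exact Ht. }
    replace (sA * sB) with (t / 2 * A + / (2 * t) * a); [lra|].
    unfold t. rewrite <- HsA, <- HsB. field. lra. }
  assert (Hi1 : mu d e m ls a <= sA * sB / DR).
  { rewrite Hmu. unfold Rdiv. apply Rmult_le_compat_r; [left; apply Rinv_0_lt_compat; lra | exact HCS]. }
  assert (HDR' : DR = dR + eR) by exact HD.
  set (k := DR / s).
  assert (Hk0 : 0 < k) by (unfold k; apply Rdiv_lt_0_compat; lra).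
  assert (Hks : k * s = DR) by (unfold k; field; lra).
  assert (Hka : k * k * a = DR * DR / 2) by (rewrite <- Hks; nra).
  assert (Hkey : mu d e m ls a > s / 2 <-> P > DR * s / 2).
  { rewrite Hmu. split; intro H.
    - apply (Rmult_lt_compat_r DR) in H; [|lra].
      replace (P / DR * DR) with P in H by (field; lra). lra.
    - apply (Rmult_lt_reg_r DR); [lra|]. replace (P / DR * DR) with P by (field; lra). lra. }
  assert (HkP : P > DR * s / 2 -> k * P > DR * DR / 2).
  { intro H. apply (Rmult_lt_compat_l k) in H; [|lra]. clear -H Hks. nra. }
  assert (Hsq2 : forall x, 0 <= x -> sqrt x * sqrt x = x) by (intros; apply sqrt_sqrt; auto).
  split; [split; [exact Hi1 | split] | split; [ | split; [split | ]]].
  - intro Hed. assert (HeR' : eR = dR) by (unfold eR, dR; rewrite Hed; reflexivity).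
    assert (Hd0 : 0 < dR) by lra.
    eapply Rle_trans; [exact Hi1|]. apply sq_le.
    + apply Rmult_le_pos; [apply sqrt_pos | apply Rlt_le; lra].
    + right.
      assert (Hx : 0 <= 1 + 1 / (2 * dR ^ 2)) by (apply Rlt_le; apply Rplus_lt_0_compat; [lra|]; apply Rdiv_lt_0_compat; nra).
      set (sx := sqrt (1 + 1 / (2 * dR ^ 2))) in *.
      assert (Hsx : sx * sx = 1 + 1 / (2 * dR ^ 2)) by (apply Hsq2; exact Hx).
      replace (sA * sB / DR * (sA * sB / DR)) with ((sA * sA) * (sB * sB) / (DR * DR)) by (field; lra).
      replace (sx * (s / 2) * (sx * (s / 2))) with ((sx * sx) * (s * s) / 4) by field.
      rewrite HsA, HsB, Hsx, Hs. unfold A. rewrite HDR', HeR'. field. lra.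
  - intro Hed. assert (HeR' : eR = dR - 1) by (unfold eR, dR; rewrite Hed, minus_IZR; reflexivity).
    assert (Hd0 : 0 < 2 * dR - 1) by lra.
    eapply Rle_trans; [exact Hi1|]. apply sq_le.
    + apply Rmult_le_pos; [apply sqrt_pos | apply Rlt_le; lra].
    + right.
      assert (Hx : 0 <= 1 + 1 / (2 * dR - 1) ^ 2) by (apply Rlt_le; apply Rplus_lt_0_compat; [lra|]; apply Rdiv_lt_0_compat; nra).
      set (sx := sqrt (1 + 1 / (2 * dR - 1) ^ 2)) in *.
      assert (Hsx : sx * sx = 1 + 1 / (2 * dR - 1) ^ 2) by (apply Hsq2; exact Hx).
      replace (sA * sB / DR * (sA * sB / DR)) with ((sA * sA) * (sB * sB) / (DR * DR)) by (field; lra).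
      replace (sx * (s / 2) * (sx * (s / 2))) with ((sx * sx) * (s * s) / 4) by field.
      rewrite HsA, HsB, Hsx, Hs. unfold A. rewrite HDR', HeR'. field. lra.
  - rewrite Hkey, HEW. fold k.
    replace (k * a) with (DR * s / 2) by (rewrite <- Hks; nra). lra.
  - intros Hed Hmu'. assert (HeR' : eR = dR) by (unfold eR, dR; rewrite Hed; reflexivity).
    apply Hkey, HkP in Hmu'. rewrite HEE. fold k.
    assert (A - DR * DR / 2 = 1) by (unfold A; rewrite HDR', HeR'; field).
    lra.
  - intros Hed Hmu'. assert (HeR' : eR = dR - 1) by (unfold eR, dR; rewrite Hed, minus_IZR; reflexivity).
    apply Hkey, HkP in Hmu'. rewrite HEE. fold k.
    assert (A - DR * DR / 2 = 1 / 2) by (unfold A; rewrite HDR', HeR'; field).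
    lra.
  - rewrite HES. fold k. rewrite <- Hks. ring.
Qed.
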